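(* Let $x_1,\dots,x_4,y_1,\dots,y_4\in\{-1,+1\}$ with $(x_k,y_k)\neq(-1,-1)$ for all $k\in\{1,2,3,4\}$. Then $$x_1x_4+x_2x_3+y_1y_2+y_3y_4-x_1y_1-x_2y_2-x_3y_3-x_4y_4\ge 0.$$ *)

(* Defs.v *)
From Stdlib Require Import ZArith.
Definition pm1 (x : Z) : Prop := x = (-1)%Z \/ x = 1%Z.

(* Main.v *)
Require Import Defs.
From Stdlib Require Import ZArith Lia.
Open Scope Z_scope.

Theorem lemma16 (x1 x2 x3 x4 y1 y2 y3 y4 : Z)
  (hx1 : pm1 x1) (hx2 : pm1 x2) (hx3 : pm1 x3) (hx4 : pm1 x4)
  (hy1 : pm1 y1) (hy2 : pm1 y2) (hy3 : pm1 y3) (hy4 : pm1 y4)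
  (h1 : (x1, y1) <> (-1, -1)) (h2 : (x2, y2) <> (-1, -1))
  (h3 : (x3, y3) <> (-1, -1)) (h4 : (x4, y4) <> (-1, -1)) :
  0 <= x1*x4 + x2*x3 + y1*y2 + y3*y4 - x1*y1 - x2*y2 - x3*y3 - x4*y4.
Proof.
  unfold pm1 in *.
  destruct hx1, hx2, hx3, hx4, hy1, hy2, hy3, hy4; subst;
    first [ exfalso; congruence | lia ].
Qed.
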